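(* Let $(m,n)$ be coprime positive integers, $\gamma\in D_{m,n}$, and let $\gamma^*\in D_{m+n,n}$ be obtained by inserting one horizontal unit step immediately after each vertical step of $\gamma$. Then $|O(\gamma^* )|=|O(\gamma)|+\frac{n(n-1)}{2}$ and $\mathrm{area}(\gamma)=\mathrm{area}(\gamma^* )$.
   Context: For coprime positive $(m,n)$, an $(m,n)$-Dyck path is a lattice path from $(0,0)$ to $(m,n)$ of $m$ horizontal unit steps and $n$ vertical unit steps lying weakly above $y=(n/m)x$; $D_{m,n}$ is the set of them. $\mathrm{area}(\gamma)$ is the number of complete unit lattice squares between $\gamma$ and its diagonal ($y=(n/m)x$ for $\gamma\in D_{m,n}$, $y=(n/(m+n))x$ for $\gamma^*\in D_{m+n,n}$). $O(\gamma)$ is the set of pairs $(r_h,r_v)$ with $r_h$ a horizontal step and $r_v$ a vertical step of $\gamma$, $r_v$ appearing after $r_h$. *)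

(* Defs.v *)
From mathcomp Require Import all_boot.
Set Implicit Arguments. Unset Strict Implicit. Unset Printing Implicit Defensive.

(* A lattice path is a sequence of unit steps: [true] = vertical (north) step,
   [false] = horizontal (east) step.  The path starts at (0,0). *)
Definition lpath := seq bool.

Definition hpos (p : lpath) (t : nat) : nat := count negb (take t p).
Definition vpos (p : lpath) (t : nat) : nat := count id (take t p).

(* (a,b)-Dyck path: a horizontal and b vertical steps, from (0,0) to (a,b),
   every lattice point of the path weakly above y = (b/a) x,
   i.e. b * x <= a * y. (Checking the vertices suffices, as the path is
   piecewise linear between them.) *)
Definition dyck (a b : nat) (p : lpath) : bool :=
  [&& count negb p == a, count id p == b &
      all (fun t => b * hpos p t <= a * vpos p t) (iota 0 (size p).+1)].

(* The unit square [i,i+1] x [j,j+1] lies weakly below the path p: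
   the path has a horizontal step from (i,k) to (i+1,k) with k >= j+1. *)
Definition below_path (p : lpath) (i j : nat) : bool :=
  has (fun t => ~~ nth false p t && (hpos p t == i) && (j < vpos p t))
      (iota 0 (size p)).

(* The unit square [i,i+1] x [j,j+1] lies weakly above y = (b/a) x:
   its lower-right corner (i+1, j) satisfies b*(i+1) <= a*j. *)
Definition above_diag (a b i j : nat) : bool := b * i.+1 <= a * j.

Definition area (a b : nat) (p : lpath) : nat :=
  #|[set ij : 'I_a * 'I_b |
      below_path p ij.1 ij.2 && above_diag a b ij.1 ij.2]|.

Definition O (p : lpath) : {set 'I_(size p) * 'I_(size p)} :=
  [set rr : 'I_(size p) * 'I_(size p) | [&& (rr.1 < rr.2)%N, ~~ nth false p rr.1 & nth false p rr.2]].

Definition star (p : lpath) : lpath :=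
  flatten (map (fun s : bool => if s then [:: true; false] else [:: false]) p).

(* Main.v *)
Require Import Defs.
From mathcomp Require Import all_boot.
From mathcomp Require Import zify.

Lemma star_t p : star (true :: p) = true :: false :: star p. Proof. by []. Qed.
Lemma star_f p : star (false :: p) = false :: star p. Proof. by []. Qed.

Lemma count_id_star p : count id (star p) = count id p.
Proof. by elim: p => [|[] p IH] //=; rewrite IH. Qed.
Lemma count_negb_star p : count negb (star p) = count negb p + count id p.
Proof. elim: p => [|[] p IH] //=; rewrite IH; lia. Qed.

Lemma has_cons (f : bool -> nat -> nat -> bool) x p :
  has (fun t => f (nth false (x::p) t) (hpos (x::p) t) (vpos (x::p) t)) (iota 0 (size p).+1)
  = f x 0 0 || has (fun t => f (nth false p t) (~~x + hpos p t) (x + vpos p t)) (iota 0 (size p)).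
Proof.
rewrite /= -(addn0 1) iotaDl has_map; congr (_ || _).
Qed.

Lemma hcol p i : has (fun t => ~~ nth false p t && (hpos p t == i)) (iota 0 (size p)) = (i < count negb p).
Proof.
elim: p i => [|x p IH] i //.
have := has_cons (fun b h v => ~~ b && (h == i)) x p => /= ->.
case: x => /=.
  by rewrite -IH; apply: eq_has => t.
case: i => [|i] //=.
by rewrite ltnS -IH; apply: eq_has => t; rewrite add1n eqSS.
Qed.

Lemma below_nil i j : below_path [::] i j = false. Proof. by []. Qed.

Lemma below_f p i j : below_path (false::p) i j = if i is i'.+1 then below_path p i' j else false.
Proof.
rewrite /below_path.
have := has_cons (fun b h v => ~~ b && (h == i) && (j < v)) false p => /= ->.
case: i => [|i].
  by apply/hasP => -[t _ /andP[/andP[_]]].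
by apply: eq_has => t; rewrite add1n eqSS.
Qed.

Lemma below_t p i j : below_path (true::p) i j = if j is j'.+1 then below_path p i j' else (i < count negb p).
Proof.
rewrite /below_path.
have := has_cons (fun b h v => ~~ b && (h == i) && (j < v)) true p => /= ->.
case: j => [|j].
  by rewrite -hcol; apply: eq_has => t; rewrite add1n andbT.
by apply: eq_has => t; rewrite add1n ltnS.
Qed.

Lemma belowB p i j : below_path p i j -> i < count negb p.
Proof.
elim: p i j => [|[] p IH] i j //.
  by rewrite below_t; case: j => [|j] //= /IH.
by rewrite below_f; case: i => [|i] //= /IH.
Qed.

Lemma starL p k j : below_path (star p) k j -> j <= k.
Proof.
elim: p k j => [|[] p IH] k j //.
  rewrite star_t below_t; case: j => [|j] // .
  rewrite below_f; case: k => [|k] // /IH; lia.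
rewrite star_f below_f; case: k => [|k] // /IH; lia.
Qed.

Lemma starB p i j : i < count negb p -> below_path (star p) (i + j) j = below_path p i j.
Proof.
elim: p i j => [|[] p IH] i j //=.
  move=> hi; rewrite star_t !below_t; case: j => [|j].
    rewrite addn0 hi /= count_negb_star; apply/idP; lia.
  by rewrite below_f addnS IH.
rewrite star_f !below_f; case: i => [|i] hi.
  case: j => [|j] //=; apply/negP => /starL; lia.
by rewrite addSn IH.
Qed.

Fixpoint cntO (p : lpath) : nat :=
  match p with [::] => 0 | x :: q => (if x then 0 else count id q) + cntO q end.

Lemma cntO_star p : cntO (star p) = cntO p + 'C(count id p, 2).
Proof.
elim: p => [|[] p IH] //=; rewrite count_id_star IH //.
  by rewrite add1n binS bin1; lia.
by rewrite add0n; lia.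
Qed.

Lemma sum_nth_count p : \sum_(t < size p) (nth false p t : nat) = count id p.
Proof.
elim: p => [|x p IH]; first by rewrite big_ord0.
by rewrite big_ord_recl /= -IH; congr (_ + _); apply: eq_bigr => i _; rewrite lift0.
Qed.

Definition Fs (p : lpath) := \sum_(s < size p) \sum_(t < size p)
   (((s < t) && ~~ nth false p s && nth false p t) : nat).

Lemma FsE p : Fs p = cntO p.
Proof.
rewrite /Fs; elim: p => [|x p IH]; first by rewrite big_ord0.
rewrite /= big_ord_recl big_ord_recl /= add0n -IH; congr (_ + _).
  case: x => /=; first by rewrite big1.
  by rewrite -sum_nth_count; apply: eq_bigr => i _; rewrite add0n.
apply: eq_bigr => s _; rewrite big_ord_recl /= /bump !add0n.
by apply: eq_bigr => t _; rewrite /bump !add0n.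
Qed.

Lemma cardO p : #|O p| = Fs p.
Proof.
rewrite /Fs pair_big /= -sum1_card big_mkcond /=.

apply: eq_bigr => -[s t] _; rewrite /O inE /=.
by rewrite andbA; case: ifP.
Qed.

Lemma shift_lt m n (i : 'I_m) (j : 'I_n) : i + j < m + n.
Proof. have := ltn_ord i; have := ltn_ord j; lia. Qed.

Definition shiftp m n (ij : 'I_m * 'I_n) : 'I_(m + n) * 'I_n :=
  (Ordinal (@shift_lt m n ij.1 ij.2), ij.2).

Lemma shift_inj m n : injective (@shiftp m n).
Proof.
move=> [i j] [i' j'] [h1 h2]; subst j'; congr pair; apply: val_inj => /=; lia.
Qed.

Lemma area_eq m n g : 0 < m -> count negb g = m ->
  area m n g = area (m + n) n (star g).
Proof.
move=> m0 cg; rewrite /area -(card_imset _ (@shift_inj m n)).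
symmetry; apply: eq_card => -[i' j]; rewrite !inE /=.
apply/idP/imsetP.
  move=> /andP[hb hd]; move/starL: (hb) => le; rewrite /above_diag in hd.
  have jn := ltn_ord j.
  have hd' : n * (i' - j).+1 <= m * j by nia.
  have im : i' - j < m.
    have : m * j < m * n by rewrite ltn_pmul2l.
    nia.
  exists (Ordinal im, j).
    by rewrite inE /= /above_diag hd' andbT -starB ?cg // (subnK le).
  rewrite /shiftp /=; congr (_, _); apply: val_inj => /=; by rewrite subnK.
case=> -[i j0]; rewrite inE /= => /andP[hb hd] [-> ->] /=.
rewrite starB ?cg // hb /= /above_diag; rewrite /above_diag in hd; nia.
Qed.

Theorem mainTheorem6 (m n : nat) (g : lpath) :
  0 < m -> 0 < n -> coprime m n -> dyck m n g ->
  #|O (star g)| = #|O g| + n * (n - 1) %/ 2 /\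
  area m n g = area (m + n) n (star g).
Proof.
move=> m0 n0 _ /and3P[/eqP cm /eqP cn _]; split; last exact: area_eq.
by rewrite !cardO !FsE cntO_star cn bin2 divn2 subn1.
Qed.
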